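(* Let $(D,\Gamma)$ be a consistent action theory, $n\ge0$, and let $X$ be an answer set of the program $\pi$. Then: (i) $s_t(X)$ is a state of $D$ for every $t\in\{0,\dots,n\}$; (ii) for every $t\in\{0,\dots,n-1\}$ and action $a$, if $occ(a,t)\in X$ then $a$ is executable in $s_t(X)$ and $s_{t+1}(X)\in\Phi(a,s_t(X))$; (iii) for every $t\in\{0,\dots,n-1\}$, if $occ(a,t)\notin X$ for every action $a$, then $s_{t+1}(X)=s_t(X)$.
   Context: Action language $\mathcal{B}$: fix finite sets $\mathbf{F}$ of fluents and $\mathbf{A}$ of actions. A fluent literal is $f$ or $\neg f$ ($f\in\mathbf{F}$); the complement $\bar l$ of $f$ is $\neg f$ and of $\neg f$ is $f$. A set of fluent literals is consistent if it contains no pair $f,\neg f$; an interpretation is a maximal consistent set. For a set $u$ of literals, $u\models p_1\wedge\dots\wedge p_k$ means $\{p_1,\dots,p_k\}\subseteq u$. A domain description $D$ is a finite set of static causal laws $\mathbf{caused}(\{p_1,\dots,p_k\},f)$ (their set is $D_C$), dynamic causal laws $\mathbf{causes}(a,f,\{p_1,\dots,p_k\})$ and executability conditions $\mathbf{executable}(a,\{p_1,\dots,p_k\})$, with $a\in\mathbf{A}$ and $f,p_i$ fluent literals; $\Gamma$ is a set of propositions $\mathbf{initially}(f)$. A consistent set $u$ is closed under $D_C$ if for every $\mathbf{caused}(P,f)\in D_C$ with $P\subseteq u$, $f\in u$; $Cl_{D_C}(u)$ is the least consistent superset of $u$ closed under $D_C$ (undefined if none). A state is an interpretation closed under $D_C$.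 Action $a$ is executable in state $s$ if some $\mathbf{executable}(a,P)\in D$ has $P\subseteq s$. $E(a,s)=\{f\mid \mathbf{causes}(a,f,P)\in D,\ P\subseteq s\}$. $\Phi(a,s)=\{s'\mid s'\text{ a state},\ s'=Cl_{D_C}(E(a,s)\cup(s\cap s'))\}$ if $a$ is executable in $s$, and $\Phi(a,s)=\emptyset$ otherwise. A trajectory is a sequence $s_0a_0s_1\dots a_{m-1}s_m$ of states $s_i$ and actions $a_i$ with $s_{i+1}\in\Phi(a_i,s_i)$. $D$ is consistent if $\Phi(a,s)\ne\emptyset$ whenever $a$ is executable in state $s$; $(D,\Gamma)$ is consistent if $D$ is consistent and $s_0^\Gamma:=\{f\mid\mathbf{initially}(f)\in\Gamma\}$ is a state of $D$. Answer sets: a ground normal program consists of rules $h\leftarrow b_1,\dots,b_m,\mathit{not}\,c_1,\dots,\mathit{not}\,c_r$ and constraints $\bot\leftarrow b_1,\dots,b_m,\mathit{not}\,c_1,\dots,\mathit{not}\,c_r$. For a set $S$ of atoms, the reduct $\Pi^S$ deletes every rule/constraint containing $\mathit{not}\,c$ with $c\in S$ and deletes all $\mathit{not}$-literals from the rest; $S$ is an answer set of $\Pi$ if $S$ is the least set of atoms closed under the non-constraint rules of $\Pi^S$ and no constraint of $\Pi^S$ has its whole body contained in $S$. The program $\pi$ (ground; $t$ ranges over $\{0,\dots,n\}$ unless stated): (1) $holds(l,0)\leftarrow$ for each $\mathbf{initially}(l)\in\Gamma$; (2) $possible(a,t)\leftarrow holds(p_1,t),\dots,holds(p_k,t)$ for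 each $\mathbf{executable}(a,\{p_1,\dots,p_k\})\in D$; (3) for $t\in\{0,\dots,n-1\}$, $holds(f,t+1)\leftarrow occ(a,t),possible(a,t),holds(p_1,t),\dots,holds(p_k,t)$ for each $\mathbf{causes}(a,f,\{p_1,\dots,p_k\})\in D$; (4) $holds(f,t)\leftarrow holds(p_1,t),\dots,holds(p_k,t)$ for each $\mathbf{caused}(\{p_1,\dots,p_k\},f)\in D$; (5) $occ(a,t)\leftarrow possible(a,t),\mathit{not}\,nocc(a,t)$ for each action $a$; (6) $nocc(a,t)\leftarrow occ(b,t)$ for each pair of distinct actions $a\ne b$; (7) for $t\in\{0,\dots,n-1\}$, $holds(l,t+1)\leftarrow holds(l,t),\mathit{not}\,holds(\bar l,t+1)$ for each fluent literal $l$; (8) $\bot\leftarrow holds(f,t),holds(\neg f,t)$ for each fluent $f$. For a set $M$ of atoms, $s_i(M)=\{l\mid l\text{ a fluent literal},\ holds(l,i)\in M\}$. *)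

(* Defs.v *)
From Stdlib Require List.
From mathcomp Require Import all_boot.
Set Implicit Arguments. Unset Strict Implicit. Unset Printing Implicit Defensive.

Section ActionLanguageB.
Variables (F A : finType).

(* A fluent literal: (f, true) is f, (f, false) is ~ f. *)
Definition lit := (F * bool)%type.
Definition compl (l : lit) : lit := (l.1, ~~ l.2).

Definition consistent (u : {set lit}) : Prop :=
  forall f : F, ~ ((f, true) \in u /\ (f, false) \in u).

Definition interpretation (u : {set lit}) : Prop :=
  consistent u /\ forall v : {set lit}, consistent v -> u \subset v -> v = u.

(* Domain description: static laws caused(P,f), dynamic laws causes(a,f,P),
   executability conditions executable(a,P). *)
Record domain := Domain {
  static_laws : seq (seq lit * lit);
  dynamic_laws : seq (A * lit * seq lit);
  exec_conds : seq (A * seq lit) }.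

Variable D : domain.

Definition closed_DC (u : {set lit}) : Prop :=
  forall c, List.In c (static_laws D) -> {subset c.1 <= u} -> c.2 \in u.

Definition is_Cl (u v : {set lit}) : Prop :=
  consistent v /\ u \subset v /\ closed_DC v /\
  forall w, consistent w -> u \subset w -> closed_DC w -> v \subset w.

Definition is_state (s : {set lit}) : Prop := interpretation s /\ closed_DC s.

Definition executable (a : A) (s : {set lit}) : Prop :=
  exists P, List.In (a, P) (exec_conds D) /\ {subset P <= s}.

Definition Eff (a : A) (s : {set lit}) : {set lit} :=
  [set l | has (fun c : A * lit * seq lit =>
                  (c.1.1 == a) && (c.1.2 == l) && all (fun p => p \in s) c.2)
               (dynamic_laws D)].

Definition in_Phi (a : A) (s s' : {set lit}) : Prop :=
  executable a s /\ is_state s' /\ is_Cl (Eff a s :|: (s :&: s')) s'.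

Definition consistent_domain : Prop :=
  forall a s, is_state s -> executable a s -> exists s', in_Phi a s s'.

Definition s0 (Gamma : seq lit) : {set lit} := [set l | l \in Gamma].

Definition consistent_theory (Gamma : seq lit) : Prop :=
  consistent_domain /\ is_state (s0 Gamma).

End ActionLanguageB.

Record rule (atom : Type) := Rule {
  head : option atom;       (* None = constraint (bottom) *)
  pos : seq atom;
  neg : seq atom }.

Section AnswerSets.
Variable atom : Type.
Implicit Types (P : seq (rule atom)) (S : atom -> bool) (T : atom -> Prop).

(* T is closed under the non-constraint rules of the reduct P^S *)
Definition reduct_closed P S T : Prop :=
  forall r h, List.In r P -> head r = Some h ->
    (forall c, List.In c (neg r) -> ~~ S c) ->
    (forall b, List.In b (pos r) -> T b) -> T h.

Definition answer_set P S : Prop :=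
  reduct_closed P S (fun x => S x) /\
  (forall T, reduct_closed P S T -> forall x, S x -> T x) /\
  (forall r, List.In r P -> head r = None ->
     (forall c, List.In c (neg r) -> ~~ S c) ->
     ~ (forall b, List.In b (pos r) -> S b)).
End AnswerSets.

Section Program.
Variables (F A : finType).

Inductive atom :=
| Holds of lit F & nat
| Possible of A & nat
| Occ of A & nat
| Nocc of A & nat.

Variables (D : domain F A) (Gamma : seq (lit F)) (n : nat).

Definition mkR h p q : rule atom := Rule h p q.

Definition lits : seq (lit F) := [seq (f, b) | f <- enum F, b <- [:: true; false]].

Definition pi_rules : seq (rule atom) :=
  [seq mkR (Some (Holds l 0)) [::] [::] | l <- Gamma] ++
  [seq mkR (Some (Possible e.1 t)) [seq Holds p t | p <- e.2] [::]
     | t <- iota 0 n.+1, e <- exec_conds D] ++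
  [seq mkR (Some (Holds c.1.2 t.+1))
           (Occ c.1.1 t :: Possible c.1.1 t :: [seq Holds p t | p <- c.2]) [::]
     | t <- iota 0 n, c <- dynamic_laws D] ++
  [seq mkR (Some (Holds c.2 t)) [seq Holds p t | p <- c.1] [::]
     | t <- iota 0 n.+1, c <- static_laws D] ++
  [seq mkR (Some (Occ a t)) [:: Possible a t] [:: Nocc a t]
     | t <- iota 0 n.+1, a <- enum A] ++
  [seq mkR (Some (Nocc ab.1 t)) [:: Occ ab.2 t] [::]
     | t <- iota 0 n.+1,
       ab <- [seq p <- [seq (a, b) | a <- enum A, b <- enum A] | p.1 != p.2]] ++
  [seq mkR (Some (Holds l t.+1)) [:: Holds l t] [:: Holds (compl l) t.+1]
     | t <- iota 0 n, l <- lits] ++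
  [seq mkR None [:: Holds (f, true) t; Holds (f, false) t] [::]
     | t <- iota 0 n.+1, f <- enum F].

Definition s_of (M : atom -> bool) (i : nat) : {set lit F} :=
  [set l | M (Holds l i)].

End Program.

(* Main.v *)
Require Import Defs.
From mathcomp Require Import all_boot.
Set Implicit Arguments. Unset Strict Implicit.

Lemma In_cat (T : Type) (x : T) s1 s2 : List.In x (s1 ++ s2) <-> List.In x s1 \/ List.In x s2.
Proof. elim: s1 => [|y s IH] /=; first by tauto. rewrite IH; tauto. Qed.

Lemma In_map (T U : Type) (f : T -> U) y s : List.In y (map f s) <-> exists x, List.In x s /\ y = f x.
Proof.
elim: s => [|x s IH] /=; first by split => // -[? []].
rewrite IH; split.
- case=> [<-|[z [? ->]]]; first by exists x; tauto.
  by exists z; tauto.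
- by case=> z [[<-|?] ->]; [left|right; exists z].
Qed.

Lemma In_flatten (T : Type) (x : T) ss : List.In x (flatten ss) <-> exists s, List.In s ss /\ List.In x s.
Proof.
elim: ss => [|s ss IH] /=; first by split => // -[? []].
rewrite In_cat IH; split.
- case=> [h|[s' [? ?]]]; first by exists s; tauto.
  by exists s'; tauto.
- by case=> s' [[<-|?] ?]; [left|right; exists s'].
Qed.

Lemma In_filter (T : Type) (p : pred T) x s : List.In x (filter p s) <-> List.In x s /\ p x.
Proof.
elim: s => [|y s IH] /=; first by tauto.
case: ifP => py /=; rewrite IH; split.
- by case=> [<-|[]]; tauto.
- by case=> [[<-|?] ?]; tauto.
- by case=> ? ?; tauto.
- move=> [[E|?] H] //. by subst; rewrite H in py.
Qed.

Lemma In_mem (T : eqType) (x : T) s : List.In x s <-> x \in s.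
Proof.
elim: s => [|y s IH] //=. rewrite in_cons IH; split.
- by case=> [->|->]; rewrite ?eqxx ?orbT.
- by case/orP => [/eqP->|]; tauto.
Qed.

Lemma In_catl (T : Type) (x : T) s1 s2 : List.In x s1 -> List.In x (s1 ++ s2).
Proof. by move=> h; apply/In_cat; left. Qed.
Lemma In_catr (T : Type) (x : T) s1 s2 : List.In x s2 -> List.In x (s1 ++ s2).
Proof. by move=> h; apply/In_cat; right. Qed.

Lemma support (atm : Type) (P : seq (rule atm)) (S : atm -> bool) x :
  answer_set P S -> S x -> exists r, List.In r P /\ Defs.head r = Some x /\
    (forall c, List.In c (neg r) -> ~~ S c) /\ (forall b, List.In b (pos r) -> S b).
Proof.
case=> Hcl [Hmin _] Sx.
pose T y := S y /\ (y = x -> exists r, List.In r P /\ Defs.head r = Some x /\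
    (forall c, List.In c (neg r) -> ~~ S c) /\ (forall b, List.In b (pos r) -> S b)).
have HT : reduct_closed P S T.
  move=> r h Hr Hh Hn Hp; have Hp' : forall b, List.In b (pos r) -> S b by move=> b /Hp [].
  split; first exact: (Hcl r h Hr Hh Hn Hp').
  by move=> Ehx; subst h; exists r.
by case: (Hmin T HT x Sx) => _; apply.
Qed.

Lemma memS (F A : finType) (X : atom F A -> bool) l t : (l \in s_of X t) = X (Holds A l t).
Proof. by rewrite inE. Qed.

Lemma In_iota' k m : List.In k (iota 0 m) <-> k < m.
Proof. by rewrite In_mem mem_iota. Qed.

Section P.
Variables (F A : finType) (D : domain F A) (Gamma : seq (lit F)) (n : nat).
Local Notation pi := (pi_rules D Gamma n).

Lemma in_r1 l : l \in Gamma -> List.In (mkR (Some (@Holds F A l 0)) [::] [::]) pi.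
Proof. move=> Hl; rewrite /pi_rules; apply: In_catl; apply/In_map; exists l; split => //; exact/In_mem. Qed.

Lemma in_r3 t c : t < n -> List.In c (dynamic_laws D) ->
  List.In (mkR (Some (@Holds F A c.1.2 t.+1))
           (Occ F c.1.1 t :: Possible F c.1.1 t :: [seq Holds A p t | p <- c.2]) [::]) pi.
Proof.
move=> Ht Hc; rewrite /pi_rules; do 2 apply: In_catr; apply: In_catl.
apply/In_flatten; eexists; split; first (apply/In_map; exists t; split; [exact/In_iota'|reflexivity]).
by apply/In_map; exists c.
Qed.

Lemma in_r4 t c : t <= n -> List.In c (static_laws D) ->
  List.In (mkR (Some (@Holds F A c.2 t)) [seq Holds A p t | p <- c.1] [::]) pi.
Proof.
move=> Ht Hc; rewrite /pi_rules; do 3 apply: In_catr; apply: In_catl.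
apply/In_flatten; eexists; split; first (apply/In_map; exists t; split; [exact/In_iota'|reflexivity]).
by apply/In_map; exists c.
Qed.

Lemma in_r6 t (a b : A) : t <= n -> a != b ->
  List.In (mkR (Some (@Nocc F A a t)) [:: Occ F b t] [::]) pi.
Proof.
move=> Ht Hab; rewrite /pi_rules; do 5 apply: In_catr; apply: In_catl.
apply/In_flatten; eexists; split; first (apply/In_map; exists t; split; [exact/In_iota'|reflexivity]).
apply/In_map; exists (a, b); split => //; apply/In_filter; split => //.
apply/In_mem; apply/allpairsP; exists (a, b) => /=; by rewrite !mem_enum.
Qed.

Lemma in_r7 t l : t < n ->
  List.In (mkR (Some (@Holds F A l t.+1)) [:: Holds A l t] [:: Holds A (compl l) t.+1]) pi.
Proof.
move=> Ht; rewrite /pi_rules; do 6 apply: In_catr; apply: In_catl.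
apply/In_flatten; eexists; split; first (apply/In_map; exists t; split; [exact/In_iota'|reflexivity]).
apply/In_map; exists l; split => //; apply/In_mem; case: l => f b.
apply/allpairsP; exists (f, b) => /=; rewrite mem_enum; split => //.
by case: b.
Qed.

Lemma in_r8 t f : t <= n ->
  List.In (mkR None [:: @Holds F A (f, true) t; Holds A (f, false) t] [::]) pi.
Proof.
move=> Ht; rewrite /pi_rules; do 7 apply: In_catr.
apply/In_flatten; eexists; split; first (apply/In_map; exists t; split; [exact/In_iota'|reflexivity]).
by apply/In_map; exists f; split => //; apply/In_mem; rewrite mem_enum.
Qed.

End P.

Ltac brk H := let t := fresh "t" in let Ht := fresh "Ht" in let s := fresh "s" in
  let c := fresh "c" in let Hc := fresh "Hc" in
  move/In_flatten: H => [s [/In_map [t [Ht ?]] H]]; subst s;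
  move/In_map: H => [c [Hc ?]]; subst.

Section Inv.
Variables (F A : finType) (D : domain F A) (Gamma : seq (lit F)) (n : nat).
Local Notation pi := (pi_rules D Gamma n).

Lemma inv_holds r l k : List.In r pi -> Defs.head r = Some (@Holds F A l k) ->
 (k = 0 /\ l \in Gamma) \/
 (exists t c, k = t.+1 /\ List.In c (dynamic_laws D) /\ c.1.2 = l /\
    pos r = Occ F c.1.1 t :: Possible F c.1.1 t :: [seq Holds A p t | p <- c.2]) \/
 (exists c, List.In c (static_laws D) /\ c.2 = l /\ pos r = [seq Holds A p k | p <- c.1]) \/
 (exists t, k = t.+1 /\ pos r = [:: Holds A l t] /\ neg r = [:: Holds A (compl l) t.+1]).
Proof.
move=> Hr Hh; move: Hr; rewrite /pi_rules 7!In_cat.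
case=> [H|[H|[H|[H|[H|[H|[H|H]]]]]]].
- move/In_map: H => [l' [Hl ?]]; subst r; move: Hh => /= [] *; subst.
  by left; split => //; exact/In_mem.
- by brk H.
- brk H; move: Hh => /= [] *; subst.
  by right; left; do 2 eexists; split; [reflexivity|split; [eassumption|split]].
- brk H; move: Hh => /= [] *; subst.
  by right; right; left; eexists; split; [eassumption|split].
- by brk H.
- by brk H.
- brk H; move: Hh => /= [] *; subst.
  by right; right; right; eexists.
- by brk H.
Qed.

Lemma inv_occ r a t : List.In r pi -> Defs.head r = Some (@Occ F A a t) ->
  pos r = [:: Possible F a t] /\ neg r = [:: Nocc F a t].
Proof.
move=> Hr Hh; move: Hr; rewrite /pi_rules 7!In_cat.
case=> [H|[H|[H|[H|[H|[H|[H|H]]]]]]].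
- by move/In_map: H => [l' [Hl ?]]; subst r.
- by brk H.
- by brk H.
- by brk H.
- by brk H; move: Hh => /= [] *; subst.
- by brk H.
- by brk H.
- by brk H.
Qed.

Lemma inv_poss r a t : List.In r pi -> Defs.head r = Some (@Possible F A a t) ->
  exists P, List.In (a, P) (exec_conds D) /\ pos r = [seq Holds A p t | p <- P].
Proof.
move=> Hr Hh; move: Hr; rewrite /pi_rules 7!In_cat.
case=> [H|[H|[H|[H|[H|[H|[H|H]]]]]]].
- by move/In_map: H => [l' [Hl ?]]; subst r.
- brk H; move: Hh => /= [] *; subst.
  by case: c Hc => a' P Hc; exists P.
- by brk H.
- by brk H.
- by brk H.
- by brk H.
- by brk H.
- by brk H.
Qed.
End Inv.

Lemma int_of (F : finType) (u : {set lit F}) : consistent u ->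
  (forall f, (f,true) \in u \/ (f,false) \in u) -> interpretation u.
Proof.
move=> Hc Hf; split => // v Hv Huv; apply/eqP; rewrite eqEsubset Huv andbT.
apply/subsetP => -[f b] Hfb.
case: b Hfb => Hfb; case: (Hf f) => H //; exfalso; apply: (Hv f); split => //;
  exact: (subsetP Huv).
Qed.

Lemma compl_of (F : finType) (u : {set lit F}) : interpretation u ->
  forall f, (f,true) \in u \/ (f,false) \in u.
Proof.
move=> [Hc Hmax] f.
case Ht: ((f,true) \in u); first by left.
case Hf: ((f,false) \in u); first by right.
exfalso.
have Hv: consistent (u :|: [set (f,true)]).
  move=> g []; rewrite !inE => /orP [Hg1|/eqP [Eg]] /orP [Hg2|/eqP E] //.
  - exact: (Hc g).
  - subst g; by rewrite Hf in Hg2.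
have E := Hmax _ Hv (subsetUl _ _).
have : (f,true) \in u by rewrite -E !inE eqxx orbT.
by rewrite Ht.
Qed.

Theorem mainTheorem5 (F A : finType) (D : domain F A) (Gamma : seq (lit F))
    (n : nat) (X : atom F A -> bool) :
  consistent_theory D Gamma ->
  answer_set (pi_rules D Gamma n) X ->
  (forall t, t <= n -> is_state D (s_of X t)) /\
  (forall t (a : A), t < n -> X (Occ F a t) ->
     executable D a (s_of X t) /\ in_Phi D a (s_of X t) (s_of X t.+1)) /\
  (forall t, t < n -> (forall a : A, ~~ X (Occ F a t)) ->
     s_of X t.+1 = s_of X t).
Proof.
move=> [_ [Hint0 _]] HX.
have [Hcl [Hmin Hcon]] := HX.
have Scons : forall t, t <= n -> consistent (s_of X t).
  move=> t Ht f; rewrite !memS => -[H1 H2].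
  apply: (Hcon _ (@in_r8 F A D Gamma n t f Ht)) => //= b [<-|[<-|[]]] //.
have Sclosed : forall t, t <= n -> closed_DC D (s_of X t).
  move=> t Ht c Hc Hsub; rewrite memS.
  apply: (Hcl _ _ (@in_r4 F A D Gamma n t c Ht Hc)) => //= b /In_map [p [Hp ->]].
  rewrite -memS; apply: Hsub; exact/In_mem.
have Hs0X : s_of X 0 = s0 Gamma.
  apply: (Hint0.2 _ (Scons 0 isT)); apply/subsetP => l; rewrite inE => Hl.
  rewrite memS; exact: (Hcl _ _ (@in_r1 F A D Gamma n l Hl)).
have Scompl : forall t, t <= n -> forall f, (f,true) \in s_of X t \/ (f,false) \in s_of X t.
  elim=> [_|t IH Ht] f; first by rewrite Hs0X; apply: compl_of.
  have [b Hb] : exists b, (f,b) \in s_of X t.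
    by case: (IH (ltnW Ht) f) => H; eexists; exact H.
  case Hc: (X (Holds A (f, ~~b) t.+1)).
    by case: b Hb Hc => _ Hc; [right|left]; rewrite memS.
  have : X (Holds A (f,b) t.+1).
    apply: (Hcl _ _ (@in_r7 F A D Gamma n t (f,b) Ht)) => //=.
    - by move=> c [<-|[]]; rewrite /compl /= Hc.
    - by move=> c [<-|[]]; rewrite -memS.
  by case: b {Hb Hc} => H; [left|right]; rewrite memS.
have Sstate : forall t, t <= n -> is_state D (s_of X t).
  move=> t Ht; split; last exact: Sclosed.
  apply: int_of; [exact: Scons | exact: Scompl].
have uniq_occ : forall t a b, t <= n -> X (Occ F a t) -> X (Occ F b t) -> a = b.
  move=> t a b Ht Ha Hb; case: (eqVneq a b) => // Hab.
  have Hn: X (Nocc F a t).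
    by apply: (Hcl _ _ (@in_r6 F A D Gamma n t a b Ht Hab)) => //= c [<-|[]].
  have [r [Hr [Hh [Hneg _]]]] := support HX Ha.
  have [_ Hr2] := inv_occ Hr Hh.
  by have := Hneg (Nocc F a t); rewrite Hr2 Hn => /(_ (or_introl erefl)).
have Hsub : forall k (w : {set lit F}),
   (forall r l, List.In r (pi_rules D Gamma n) -> Defs.head r = Some (Holds A l k) ->
     (forall c, List.In c (neg r) -> ~~ X c) ->
     (forall b, List.In b (pos r) -> X b /\ forall l', b = Holds A l' k -> l' \in w) ->
     X (Holds A l k) -> l \in w) -> s_of X k \subset w.
  move=> k w H; apply/subsetP => l; rewrite memS => Hl.
  pose T y := X y /\ forall l', y = Holds A l' k -> l' \in w.
  have HT : reduct_closed (pi_rules D Gamma n) X T.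
    move=> r h Hr Hh Hn Hp.
    have Xh : X h by apply: (Hcl r h Hr Hh Hn) => b /Hp [].
    split => // l' E; subst h; exact: H Hr Hh Hn Hp Xh.
  by have [_ ] := Hmin T HT _ Hl; apply.
split; first exact: Sstate.
split.
  move=> t a Ht Hocc.
  have [r [Hr [Hh [Hneg Hpos]]]] := support HX Hocc.
  have [Hr1 _] := inv_occ Hr Hh.
  have Hposs : X (Possible F a t) by apply Hpos; rewrite Hr1; left.
  have [r' [Hr' [Hh' [_ Hpos']]]] := support HX Hposs.
  have [P [HP Hr'1]] := inv_poss Hr' Hh'.
  have Hexe : executable D a (s_of X t).
    exists P; split => // p Hp; rewrite memS; apply: Hpos'; rewrite Hr'1.
    apply/In_map; exists p; split => //; exact/In_mem.
  split => //; split => //; split; first exact: Sstate.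
  split; first exact: Scons.
  split.
    apply/subsetP => l; rewrite in_setU in_setI /Eff inE => /orP [|/andP [_ ->]] //.
    move=> /hasP [c Hc /andP [/andP [/eqP Ha /eqP Hl] Hall]].
    rewrite memS -Hl.
    apply: (Hcl _ _ (@in_r3 F A D Gamma n t c Ht (proj2 (In_mem _ _) Hc))) => //= b.
    move=> [<-|[<-|/In_map [p [Hp ->]]]]; [by rewrite Ha| by rewrite Ha | ].
    rewrite -memS; exact: (allP Hall) p (proj1 (In_mem _ _) Hp).
  split; first exact: Sclosed.
  move=> w Hw Hsw Hclw; apply: Hsub => r0 l Hr0 Hh0 Hn0 Hp0 Xh.
  case: (inv_holds Hr0 Hh0) => [[E _]|[[t' [c [Et [Hc [Hl Hpc]]]]]|[[c [Hc [Hl Hpc]]]|[t' [Et [Hpc Hnc]]]]]].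
  - discriminate.
  - case: Et => ?; subst t'.
    have Xo : X (Occ F c.1.1 t) by case: (Hp0 (Occ F c.1.1 t)); first by rewrite Hpc; left.
    have Ea := uniq_occ t _ _ (ltnW Ht) Xo Hocc.
    apply: (subsetP Hsw); rewrite in_setU /Eff inE; apply/orP; left; apply/hasP.
    exists c; first exact/In_mem.
    rewrite Ea Hl !eqxx /=; apply/allP => p Hp; rewrite memS.
    have [] := Hp0 (Holds A p t) => //; rewrite Hpc; right; right.
    apply/In_map; exists p; split => //; exact/In_mem.
  - rewrite -Hl; apply: (Hclw c Hc) => p Hp.
    have Hin : List.In (Holds A p t.+1) (pos r0).
      rewrite Hpc; apply/In_map; exists p; split => //; exact/In_mem.
    by have [_ ->] := Hp0 _ Hin.
  - case: Et => ?; subst t'.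
    apply: (subsetP Hsw); rewrite in_setU in_setI !memS Xh andbT; apply/orP; right.
    by case: (Hp0 (Holds A l t)); first by rewrite Hpc; left.
move=> t Ht Hno.
have Hs1 : s_of X t.+1 \subset s_of X t.
  apply: Hsub => r0 l Hr0 Hh0 Hn0 Hp0 Xh.
  case: (inv_holds Hr0 Hh0) => [[E _]|[[t' [c [Et [Hc [Hl Hpc]]]]]|[[c [Hc [Hl Hpc]]]|[t' [Et [Hpc Hnc]]]]]].
  - discriminate.
  - case: Et => ?; subst t'.
    case: (Hp0 (Occ F c.1.1 t)); first by rewrite Hpc; left.
    by rewrite (negbTE (Hno _)).
  - rewrite -Hl; apply: (Sclosed t (ltnW Ht) c Hc) => p Hp.
    have Hin : List.In (Holds A p t.+1) (pos r0).
      rewrite Hpc; apply/In_map; exists p; split => //; exact/In_mem.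
    by have [_ ->] := Hp0 _ Hin.
  - case: Et => ?; subst t'.
    rewrite memS.
    by case: (Hp0 (Holds A l t)); first by rewrite Hpc; left.
apply/eqP; rewrite eqEsubset Hs1 /=.
apply/subsetP => l Hl; rewrite memS.
apply: (Hcl _ _ (@in_r7 F A D Gamma n t l Ht)) => //= b.
- move=> [<-|[]]; apply/negP => Hc.
  have Hc' : compl l \in s_of X t by apply: (subsetP Hs1); rewrite memS.
  case: l Hl Hc Hc' => f [] Hl _ Hc'; apply: (Scons t (ltnW Ht) f); split => //.
- by move=> [<-|[]]; rewrite -memS.
Qed.
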